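(* Let $\epsilon>0$ and let $G=(S,B,E)$ be a bipartite graph with weights $w:S\to\mathbb{R}_+$ and a fixed arrival order of $B$. For $y\in[0,1]^S$ let $f(y)$ be the total weight $w(M)$ of the matching $M$ produced by $\epsilon$-\textsc{Ranking} on $G$ with samples $x_j=y_j$. Let $x\in[0,1]^S$, $j^\star\in S$ and $\theta\in[0,1]$ be arbitrary, and define $x'$ by $x'_{j^\star}=\theta$ and $x'_j=x_j$ for $j\neq j^\star$. Then \[ |f(x)-f(x')|\le\left(1+\frac{2}{\epsilon}\right)w_{j^\star}. \]
   Context: Buyers $B$ arrive one at a time in the fixed order, each revealing its neighborhood $N(i)\subseteq S$. $\epsilon$-\textsc{Ranking} with samples $x\in[0,1]^S$: when buyer $i$ arrives, match $i$ to an unmatched $j\in N(i)$ maximizing $w_j(1-e^{x_j-1-\epsilon})$ (leave $i$ unmatched if none exists), with ties broken according to a fixed total order on $S$. $w(M)=\sum_{\{i,j\}\in M}w_j$ where $j\in S$. *)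

(* Defs.v *)
From HB Require Import structures.
From mathcomp Require Import all_boot all_order all_algebra.
From mathcomp Require Import all_classical all_reals all_analysis.
Set Implicit Arguments. Unset Strict Implicit. Unset Printing Implicit Defensive.
Import Order.TTheory GRing.Theory Num.Theory.
Local Open Scope ring_scope.

Section EpsRanking.
Variables (R : realType) (S B : finType).

Definition score (eps : R) (w x : S -> R) (j : S) : R :=
  w j * (1 - expR (x j - 1 - eps)).

Definition choose_seller (rank : S -> nat) (eps : R) (w x : S -> R)
    (C : {set S}) : option S :=
  [pick j in C | [forall k in C,
      (score eps w x k < score eps w x j) ||
      ((score eps w x k == score eps w x j) && (rank j <= rank k)%N)]].

(* One arrival step: state = (matched sellers, matching built so far). *)
Definition ranking_step (N : B -> {set S}) (rank : S -> nat) (eps : R)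
    (w x : S -> R) (st : {set S} * seq (B * S)) (i : B)
    : {set S} * seq (B * S) :=
  match choose_seller rank eps w x (N i :\: st.1) with
  | Some j => (j |: st.1, (i, j) :: st.2)
  | None => st
  end.

Definition eps_ranking (N : B -> {set S}) (arr : seq B) (rank : S -> nat)
    (eps : R) (w x : S -> R) : seq (B * S) :=
  (foldl (ranking_step N rank eps w x) (finset.set0, [::]) arr).2.

Definition match_weight (w : S -> R) (M : seq (B * S)) : R :=
  \sum_(p <- M) w p.2.

End EpsRanking.

(* Main.v *)
Require Import Defs.
From HB Require Import structures.
From mathcomp Require Import all_boot all_order all_algebra.
From mathcomp Require Import all_classical all_reals all_analysis.
From mathcomp Require Import lra ring.
Import Order.TTheory GRing.Theory Num.Theory.
Local Open Scope ring_scope.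

Section Proofs.
Variables (R : realType) (S B : finType).
Variables (rank : S -> nat) (eps : R) (w : S -> R).

Definition lex (y : S -> R) (j k : S) : bool :=
  (score eps w y k < score eps w y j) ||
  ((score eps w y k == score eps w y j) && (rank j <= rank k)%N).

Lemma lex_refl y : reflexive (lex y).
Proof. by move=> j; rewrite /lex eqxx leqnn orbT. Qed.

Lemma lex_trans y : transitive (lex y).
Proof.
move=> j i k; rewrite /lex => /orP[h1|/andP[/eqP e1 r1]] /orP[h2|/andP[/eqP e2 r2]].
- by rewrite (lt_trans h2 h1).
- by rewrite e2 h1.
- by rewrite -e1 h2.
- by rewrite e2 e1 eqxx (leq_trans r1 r2) orbT.
Qed.

Lemma lex_total y : total (lex y).
Proof.
move=> j k; rewrite /lex.
by case: (ltgtP (score eps w y k) (score eps w y j)) => h //=; rewrite leq_total.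
Qed.

Lemma lex_score y j k : lex y j k -> score eps w y k <= score eps w y j.
Proof. by rewrite /lex => /orP[/ltW //|/andP[/eqP -> _]]. Qed.

Lemma lex_anti y j k : injective rank -> lex y j k -> lex y k j -> j = k.
Proof.
move=> ri; rewrite /lex => /orP[h1|/andP[/eqP e1 r1]] /orP[h2|/andP[/eqP e2 r2]].
- by move: (lt_trans h1 h2); rewrite ltxx.
- by move: h1; rewrite e2 ltxx.
- by move: h2; rewrite e1 ltxx.
- by apply: ri; apply/eqP; rewrite eqn_leq r1 r2.
Qed.

Definition best y (C : {set S}) j := [forall k in C, lex y j k].

Lemma chooseE y C : choose_seller rank eps w y C = [pick j in C | best y C j].
Proof. by []. Qed.

Lemma chooseP y C :
  match choose_seller rank eps w y C with
  | Some j => (j \in C) && best y C j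
  | None => C == finset.set0 end.
Proof.
rewrite chooseE; case: pickP => [j /andP[-> ->] //| H].
apply/eqP/setP => j0; rewrite inE; apply/negbTE/negP => j0C.
case: (@extremumP S S (lex y) j0 (fun j => j \in C) id (lex_refl y) (lex_trans y) (lex_total y) j0C) => m mC mb.
have := H m; rewrite mC /=; move/negP; apply.
by apply/forall_inP => k kC; apply: mb.
Qed.

Lemma choose_sub y (C C' : {set S}) j : injective rank -> C' \subset C -> j \in C' -> best y C j ->
  choose_seller rank eps w y C' = Some j.
Proof.
move=> ri sub jC' bj; have := chooseP y C'.
case: choose_seller => [k /andP[kC' bk]|/eqP C0]; last by move: jC'; rewrite C0 inE.
congr Some; apply: (@lex_anti y k j ri).
- by move/forall_inP: bk; apply.
- by move/forall_inP: bj; apply; move/fintype.subsetP: sub; apply.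
Qed.


Lemma num_aux (wj ws t E : R) : 0 < eps -> 0 <= wj -> 0 <= ws -> 0 < t -> t * E = 1 -> 1 + eps <= E ->
  wj * (1 - t) <= ws -> wj * eps <= ws * (1 + eps).
Proof. move=> he hj hs ht htE hE h.
have h1: wj*(E-1) <= ws*E by nra.
have h2: ws*E*eps <= ws*(1+eps)*(E-1) by nra.
have h3: (wj*eps - ws*(1+eps))*(E-1) <= 0 by nra.
nra. Qed.

Lemma score_bound y j js : 0 < eps -> (forall k, 0 <= w k) -> y j <= 1 ->
  score eps w y j <= score eps w y js -> w j * eps <= w js * (1 + eps).
Proof.
move=> he hw hy; rewrite /score => h.
apply: (@num_aux _ _ (expR (- eps)) (expR eps)) => //.
- exact: expR_gt0.
- by rewrite expRN mulVf // gt_eqF // expR_gt0.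
- exact: expR_ge1Dx.
- have e1 : expR (y j - 1 - eps) <= expR (- eps) by rewrite ler_expR; lra.
  have e2 := expR_gt0 (y js - 1 - eps).
  have hj := hw j; have hs := hw js.
  nra.
Qed.

Variables (N : B -> {set S}) (js : S) (y : S -> R).
Hypothesis rank_inj : injective rank.

Definition N' i := N i :\ js.
Definition W (M : seq (B * S)) := match_weight w M.

Definition Inv (st st' : {set S} * seq (B * S)) : Prop :=
  (st'.1 = st.1 :\ js /\ W st.2 - W st'.2 = (if js \in st.1 then w js else 0))
  \/ exists j', js \in st.1 /\ j' \notin st.1 /\ j' != js /\ st'.1 = j' |: (st.1 :\ js) /\
        W st.2 - W st'.2 = w js - w j' /\ score eps w y j' <= score eps w y js.

Lemma W_cons i j M : W ((i, j) :: M) = w j + W M.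
Proof. by rewrite /W /match_weight big_cons. Qed.

Lemma step_inv st st' i : Inv st st' ->
  Inv (ranking_step N rank eps w y st i) (ranking_step N' rank eps w y st' i).
Proof.
case: st => A M; case: st' => A' M'; rewrite /ranking_step /Inv /=.
case=> [[-> hW] | [j' [jsA [j'A [j'js [-> [hW hs]]]]]]].
- have eC : N' i :\: (A :\ js) = (N i :\: A) :\ js.
    by apply/setP => k; rewrite ?inE; case: (k =P js).
  rewrite eC; have := chooseP y (N i :\: A).
  case: (choose_seller rank eps w y (N i :\: A)) => [j|/eqP C0]; last first.
    have := chooseP y ((N i :\: A) :\ js).
    case: choose_seller => [k /andP[]|_]; last by left.
    by rewrite C0 !inE andbF.
  move=> /andP[jC bj]; move: (jC); rewrite ?inE => /andP[jA jN].
  case: (j =P js) => [ej | nj].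
  + subst j; rewrite (negbTE jA) in hW.
    have := chooseP y ((N i :\: A) :\ js).
    case: choose_seller => [j'' /andP[j''C bj''] | _].
    * right; exists j''; move: (j''C); rewrite ?inE => /andP[j''js /andP[j''A j''N]].
      split; [|split; [|split; [|split; [|split]]]].
      -- by rewrite ?inE eqxx.
      -- by rewrite ?inE negb_or j''js j''A.
      -- exact: j''js.
      -- by congr (_ |: _); apply/setP => k; rewrite ?inE; case: (k =P js).
      -- by rewrite /= ?W_cons; lra.
      -- apply: lex_score; move/forall_inP: bj; apply.
         by move: j''C; rewrite ?inE => /andP[].
    * left; split.
      -- by apply/setP => k; rewrite ?inE; case: (k =P js).
      -- by rewrite /= ?W_cons ?inE eqxx /=; lra.
  + have jC' : j \in (N i :\: A) :\ js by rewrite ?inE jA jN (introN eqP nj).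
    rewrite (choose_sub _ _ _ _ rank_inj _ jC' bj); last by apply/fintype.subsetP => k; rewrite ?inE => /andP[].
    left; split.
    * by apply/setP => k; rewrite ?inE; case: (k =P js) => // ->; case: (js =P j) => // e; case: nj.
    * rewrite /= ?W_cons ?inE; have -> : (js == j) = false by apply/eqP => e; apply: nj.
      by rewrite /=; lra.
- have eC : N' i :\: (j' |: (A :\ js)) = (N i :\: A) :\ j'.
    apply/setP => k; rewrite ?inE; case: (k =P js) => [->|] /=; first by rewrite jsA !andbF.
    by move=> _; case: (k =P j').
  rewrite eC; have := chooseP y (N i :\: A).
  case: (choose_seller rank eps w y (N i :\: A)) => [j|/eqP C0]; last first.
    have := chooseP y ((N i :\: A) :\ j').
    case: choose_seller => [k /andP[]|_]; last by right; exists j'.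
    by rewrite C0 !inE andbF.
  move=> /andP[jC bj]; move: (jC); rewrite ?inE => /andP[jA jN].
  have jjs : j != js by apply: contraNneq jA => ->.
  case: (j =P j') => [ej | nj].
  + subst j.
    have := chooseP y ((N i :\: A) :\ j').
    case: choose_seller => [j'' /andP[j''C bj''] | _].
    * right; exists j''; move: (j''C); rewrite ?inE => /andP[j''j' /andP[j''A j''N]].
      have j''js : j'' != js by apply: contraNneq j''A => ->.
      split; [|split; [|split; [|split; [|split]]]].
      -- by rewrite ?inE jsA orbT.
      -- by rewrite ?inE negb_or j''j' j''A.
      -- exact: j''js.
      -- apply/setP => k; rewrite ?inE; case: (k =P js) => [->|] //=.
         by rewrite eq_sym (negbTE j''js) eq_sym (negbTE j'js).
      -- by rewrite /= ?W_cons; lra.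
      -- apply: le_trans hs; apply: lex_score; move/forall_inP: bj; apply.
         by move: j''C; rewrite ?inE => /andP[].
    * left; split.
      -- apply/setP => k; rewrite ?inE; case: (k =P js) => [->|] //=.
         by rewrite eq_sym (negbTE j'js).
      -- by rewrite /= ?W_cons ?inE jsA orbT; lra.
  + have jC' : j \in (N i :\: A) :\ j' by rewrite ?inE jA jN (introN eqP nj).
    rewrite (choose_sub _ _ _ _ rank_inj _ jC' bj); last by apply/fintype.subsetP => k; rewrite ?inE => /andP[].
    right; exists j'; split; [|split; [|split; [|split; [|split]]]] => //.
    * by rewrite ?inE jsA orbT.
    * by rewrite ?inE negb_or j'A andbT; apply/eqP => e; apply: nj.
    * apply/setP => k; rewrite ?inE; case: (k =P js) => [->|_] /=.
        by rewrite eq_sym (negbTE jjs).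
      by case: (k == j); case: (k == j').
    * by rewrite /= ?W_cons; lra.
Qed.

Lemma fold_inv (s : seq B) st st' : Inv st st' ->
  Inv (foldl (ranking_step N rank eps w y) st s) (foldl (ranking_step N' rank eps w y) st' s).
Proof. by elim: s st st' => //= i s IH st st' h; apply: IH; apply: step_inv. Qed.

Lemma diff_bound (s : seq B) : 0 < eps -> (forall k, 0 <= w k) -> (forall k, y k <= 1) ->
  - w js <= (W (eps_ranking N s rank eps w y) - W (eps_ranking N' s rank eps w y)) * eps <= w js * eps.
Proof.
move=> he hw hy.
set d := (W _ - W _).
have h0 : Inv (finset.set0, [::]) (finset.set0, [::]).
  left; rewrite /=; split; first by apply/finset.setP => k; rewrite in_setD1 finset.in_set0 andbF.
  by rewrite /W /match_weight /= ?big_nil ?finset.in_set0 ?subrr.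
have := fold_inv s _ _ h0; rewrite /Inv -/(eps_ranking N s rank eps w y) -/(eps_ranking N' s rank eps w y) -/d.
have hjs := hw js.
case=> [[_ ->] | [j' [_ [_ [_ [_ [-> hs]]]]]]].
- by case: ifP => _; apply/andP; split; nra.
- have := @score_bound y j' js he hw (hy j') hs; have := hw j' => *.
  apply/andP; split; nra.
Qed.
End Proofs.

Lemma rank_N'_eq (R : realType) (S B : finType) (N : B -> {set S}) (rank : S -> nat) (eps : R) (w : S -> R)
  (js : S) (y1 y2 : S -> R) (s : seq B) :
  (forall j, j != js -> y1 j = y2 j) ->
  eps_ranking (@N' S B N js) s rank eps w y1 = eps_ranking (@N' S B N js) s rank eps w y2.
Proof.
move=> hy; rewrite /eps_ranking; congr (_.2).
have hstep : forall st i, ranking_step (@N' S B N js) rank eps w y1 st i = ranking_step (@N' S B N js) rank eps w y2 st i.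
  move=> st i; rewrite /ranking_step.
  have -> : choose_seller rank eps w y1 (@N' S B N js i :\: st.1) = choose_seller rank eps w y2 (@N' S B N js i :\: st.1) => //.
  rewrite /choose_seller; apply: eq_pick => j /=.
  case jC: (j \in _) => //=.
  have jn : j != js by move: jC; rewrite /N' ?inE => /andP[_ /andP[]].
  apply: eq_forallb_in => k kC.
  have kn : k != js by move: kC; rewrite /N' ?inE => /andP[_ /andP[]].
  by rewrite /score (hy _ jn) (hy _ kn).
elim: s (finset.set0, [::]) => //= i s IH st.
by rewrite hstep IH.
Qed.

Theorem lemma7 (R : realType) (S B : finType)
  (N : B -> {set S}) (arr : seq B) (rank : S -> nat) (w : S -> R) (eps : R)
  (x : S -> R) (jstar : S) (theta : R) :
  0 < eps ->
  (forall j, 0 <= w j) ->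
  uniq arr -> (forall i : B, i \in arr) ->
  injective rank ->
  (forall j, 0 <= x j <= 1) ->
  0 <= theta <= 1 ->
  let x' := fun j => if j == jstar then theta else x j in
  let f := fun y : S -> R => match_weight w (eps_ranking N arr rank eps w y) in
  `|f x - f x'| <= (1 + 2 / eps) * w jstar.
Proof.
move=> he hw _ _ ri hx ht; cbv zeta.
set x' := (fun j => if j == jstar then theta else x j).
have hx1 : forall k, x k <= 1 by move=> k; case/andP: (hx k).
have hx'1 : forall k, x' k <= 1.
  by move=> k; rewrite /x'; case: ifP => _ //; case/andP: ht.
have h1 := @diff_bound R S B rank eps w N jstar x ri arr he hw hx1.
have h2 := @diff_bound R S B rank eps w N jstar x' ri arr he hw hx'1.
have eg : eps_ranking (N' S B N jstar) arr rank eps w x' = eps_ranking (N' S B N jstar) arr rank eps w x.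
  apply: rank_N'_eq => j /negbTE hj; by rewrite /x' hj.
rewrite eg in h2.
move: h1 h2; rewrite /W.
set g := match_weight w (eps_ranking (N' S B N jstar) arr rank eps w x).
set a := match_weight w (eps_ranking N arr rank eps w x).
set b := match_weight w (eps_ranking N arr rank eps w x').
move=> /andP[h1 h1'] /andP[h2 h2'].
have hj := hw jstar.
have ez : eps * eps^-1 = 1 by rewrite mulfV // gt_eqF.
have hz : 0 < eps^-1 by rewrite invr_gt0.
set z := eps^-1 in ez hz.
have -> : (1 + 2 / eps) * w jstar = w jstar + 2 * (w jstar * z) by rewrite /z; ring.
have hwz : 0 <= w jstar * z by nra.
have u1 : (a - b) * eps <= w jstar * eps + w jstar by nra.
have u2 : - (w jstar * eps + w jstar) <= (a - b) * eps by nra.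
have e1 : a - b = (a - b) * eps * z by rewrite -mulrA ez mulr1.
rewrite ler_norml; apply/andP; split; nra.
Qed.
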